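(* Let $M\ge2$, $u:\{0,1\}^M\to\mathbb R$, let $h$ be the solution of the Dirichlet problem on ${\mathbb T}^{(M)}$ with boundary data $u$, and let $a$, $\Sigma$ be as follows: $a(z^{(n)})=h(z^{(n)})-h(z^{(n-1)})$ and $\Sigma(z^{(n)})=\sum_{y\in\{0,1\}^{M-n}}u(z^{(n)}y)$. Set $b_n=(2^{M-n+1}-1)^{-1}$ for $1\le n\le M$. Then for all $z\in\{0,1\}^M$ and $1\le n\le M-1$, $$h(z^{(n)})=b_n\Sigma(z^{(n)})+\sum_{\ell=1}^{n-1}\frac{b_{n-\ell+1}\,b_{n-\ell}}{b_{n+1}}\,\Sigma(z^{(n-\ell)})$$ and $$a(z^{(n)})=b_n\Sigma(z^{(n)})+\sum_{\ell=1}^{n-1}b_{n-\ell}\,\Sigma(z^{(n-\ell)})\left(\frac{b_{n-\ell+1}}{b_{n+1}}-\frac{b_{n-\ell+1}}{b_n}\right).$$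
   Context: Binary tree: for $n\ge0$, $\{0,1\}^n$ is the set of vertices of generation $n$ (words $z=z_1\cdots z_n$; generation $0$ is the root $\emptyset$). For a vertex $z$ of generation $n$, its children are $z0,z1$, and for $0\le m\le n$, $z^{(m)}=z_1\cdots z_m$ is its ancestor in generation $m$; $zy$ denotes concatenation of words. ${\mathbb T}^{(M)}$ is the tree of generations $0,\dots,M$. Dirichlet problem: given $M\ge1$ and $u:\{0,1\}^M\to\mathbb R$, its solution is the unique $h$ on the vertices of ${\mathbb T}^{(M)}$ with $h(\emptyset)=0$, $h(z)=u(z)$ for $z\in\{0,1\}^M$, and $h(z0)+h(z1)+h(z^{(n-1)})=3h(z)$ for all $z\in\{0,1\}^n$, $1\le n<M$. *)

(* Defs.v *)
(* Vertices of the binary tree are words z : seq bool;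
   generation n = words of size n; root = [::]. *)
From mathcomp Require Import all_boot all_order all_algebra.
Set Implicit Arguments. Unset Strict Implicit. Unset Printing Implicit Defensive.
Import Order.TTheory GRing.Theory Num.Theory.
Local Open Scope ring_scope.

Definition anc (z : seq bool) (m : nat) : seq bool := take m z.

(* h solves the Dirichlet problem on T^(M) with boundary data u
   (u is only consulted on words of length M) *)
Definition dirichlet_sol (R : ringType) (M : nat) (u : seq bool -> R)
    (h : seq bool -> R) : Prop :=
  [/\ h [::] = 0,
      (forall z : seq bool, size z = M -> h z = u z) &
      (forall (n : nat) (z : seq bool), (1 <= n < M)%N -> size z = n ->
         h (rcons z false) + h (rcons z true) + h (anc z n.-1) = 3 * h z)].

Definition incr (R : ringType) (h : seq bool -> R) (z : seq bool) (n : nat) : R :=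
  h (anc z n) - h (anc z n.-1).

Definition Sigma (R : ringType) (M : nat) (u : seq bool -> R) (w : seq bool) : R :=
  \sum_(y : (M - size w).-tuple bool) u (w ++ y).

Definition bcoef (R : fieldType) (M n : nat) : R :=
  ((2 ^ (M - n + 1))%:R - 1)^-1.

(* Main.v *)
Require Import Defs.
From mathcomp Require Import all_boot all_order all_algebra.
From mathcomp Require Import ring lra zify.
Import Order.TTheory GRing.Theory Num.Theory.
Local Open Scope ring_scope.
Set Implicit Arguments. Unset Strict Implicit.
Lemma sum_tupleS (R : ringType) k (F : seq bool -> R) :
 \sum_(t : k.+1.-tuple bool) F t = \sum_(b : bool) \sum_(t : k.-tuple bool) F (b :: t).
Proof.
rewrite pair_big /=.
rewrite (reindex (fun p : bool * k.-tuple bool => [tuple of p.1 :: p.2])) //=.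
exists (fun t : k.+1.-tuple bool => (thead t, [tuple of behead t])).
  by case=> b t /=; rewrite (_ : [tuple of behead (b :: t)] = t) //; apply: val_inj.
by move=> t _; apply: val_inj => /=; case: t => [[|x s] //=].
Qed.

Lemma SigmaE (R : ringType) M (u : seq bool -> R) w k :
  (M - size w)%N = k -> Sigma M u w = \sum_(t : k.-tuple bool) u (w ++ t).
Proof. by rewrite /Sigma => ->. Qed.

Lemma key (R : realFieldType) M (u : seq bool -> R) h :
  dirichlet_sol M u h ->
  forall d w, (M - size w)%N = d -> (1 <= size w <= M)%N ->
  Sigma M u w = ((2 ^ d.+1)%:R - 1) * h w - ((2 ^ d)%:R - 1) * h (take (size w).-1 w).
Proof.
case=> h0 hb hh; elim=> [|d IH] w Hd Hw.
  rewrite (@SigmaE _ _ _ _ _ Hd).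
  rewrite (eq_bigr (fun _ => u w)); last by move=> t _; rewrite (tuple0 t) cats0.
  rewrite sumr_const card_tuple expn0 mulr1n.
  have Hs : size w = M by apply/eqP; rewrite eqn_leq; case/andP: Hw => _ ->; rewrite -subn_eq0 Hd.
  rewrite hb //.
  rewrite expn0 expn1 subrr mul0r subr0.
  by rewrite -[2%N]/(1+1)%N natrD addrK mul1r.
have Hn : (size w < M)%N by rewrite -subn_gt0 Hd.
have Hrc : forall b, (M - size (rcons w b))%N = d.
  by move=> b; rewrite size_rcons subnS Hd.
rewrite (@SigmaE _ _ _ _ _ Hd) (sum_tupleS _ (fun s => u (w ++ s))) big_bool /=.
have Sb : forall b, Sigma M u (rcons w b) = \sum_(t : d.-tuple bool) u (w ++ b :: t).
  by move=> b; rewrite (@SigmaE _ _ _ _ _ (Hrc b)); apply: eq_bigr => t _; rewrite cat_rcons.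
rewrite -!Sb !IH ?Hrc ?size_rcons //.
rewrite /= -!cats1 !take_size_cat //.
case/andP: (Hw) => Hw1 _.
have E := hh (size w) w ltac:(by rewrite Hw1 Hn) erefl.
rewrite /anc in E.
rewrite (_ : h (w ++ [:: true]) = 3 * h w - h (take (size w).-1 w) - h (w ++ [:: false])); last first.
  by rewrite -E !cats1; ring.
rewrite !expnS !natrM; ring.
Qed.

Lemma sum_rev (R : ringType) n (F : nat -> R) :
  \sum_(1 <= l < n) F (n - l)%N = \sum_(1 <= j < n) F j.
Proof.
rewrite big_nat_rev; apply: eq_big_nat => i /andP[h1 h2]; congr F; lia.
Qed.

Lemma bnz (R : realFieldType) M k : bcoef R M k != 0.
Proof.
rewrite /bcoef invr_eq0 subr_eq0 pnatr_eq1 -(expn0 2) eqn_exp2l //; lia.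
Qed.

Lemma rec (R : realFieldType) M (u : seq bool -> R) h z n :
  dirichlet_sol M u h -> size z = M -> (1 <= n <= M - 1)%N ->
  h (take n z) = bcoef R M n * Sigma M u (take n z)
     + bcoef R M n / bcoef R M (n + 1) * h (take n.-1 z).
Proof.
move=> Hs Hz Hn.
have := key Hs (erefl (M - size (take n z))%N).
rewrite size_take Hz.
have -> : (if (n < M)%N then n else M) = n by case: ifP => //; lia.
rewrite take_takel; last by lia.
move=> /(_ ltac:(lia)) E.
have E1 : (bcoef R M n)^-1 = (2 ^ (M - n).+1)%:R - 1 by rewrite /bcoef invrK addn1.
have E2 : (bcoef R M (n + 1))^-1 = (2 ^ (M - n))%:R - 1.
  by rewrite /bcoef invrK (_ : (M - (n + 1) + 1 = M - n)%N) //; lia.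
rewrite -E1 -E2 in E; rewrite E.
have := bnz R M n; have := bnz R M (n + 1); move=> ? ?; field; apply/andP; split => //.
Qed.

Lemma claim (R : realFieldType) M (u : seq bool -> R) h z :
  dirichlet_sol M u h -> size z = M -> forall n, (n <= M - 1)%N ->
  h (anc z n) = \sum_(1 <= j < n.+1)
     bcoef R M (j + 1) * bcoef R M j / bcoef R M (n + 1) * Sigma M u (anc z j).
Proof.
move=> Hs Hz; elim=> [|n IH] Hn.
  by rewrite big_geq // /anc take0; case: Hs.
rewrite (rec Hs Hz) //=.
rewrite -/(anc z n) IH; last by lia.
rewrite [in RHS]big_nat_recr //= addrC; congr (_ + _).
  rewrite /anc; have := bnz R M (n.+1 + 1); move=> ?; field => //.
rewrite mulr_sumr; apply: eq_bigr => j _.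
have := bnz R M (n + 1); have := bnz R M (n.+1 + 1); move=> ? ?.
rewrite -addn1; field; by rewrite !bnz.
Qed.

Theorem lemma2p2 (R : realFieldType) (M : nat) (u : seq bool -> R)
    (h : seq bool -> R) :
  (2 <= M)%N ->
  dirichlet_sol M u h ->
  forall (z : seq bool) (n : nat), size z = M -> (1 <= n <= M - 1)%N ->
    h (anc z n) =
      bcoef R M n * Sigma M u (anc z n)
      + \sum_(1 <= l < n)
          (bcoef R M (n - l + 1) * bcoef R M (n - l) / bcoef R M (n + 1))
          * Sigma M u (anc z (n - l))
    /\
    incr h z n =
      bcoef R M n * Sigma M u (anc z n)
      + \sum_(1 <= l < n)
          bcoef R M (n - l) * Sigma M u (anc z (n - l))
          * (bcoef R M (n - l + 1) / bcoef R M (n + 1)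
             - bcoef R M (n - l + 1) / bcoef R M n).
Proof.
move=> HM Hs z n Hz /andP[Hn1 Hn2].
have C := claim Hs Hz.
have R1 := sum_rev n (fun j => bcoef R M (j + 1) * bcoef R M j / bcoef R M (n + 1) * Sigma M u (anc z j)).
have R2 := sum_rev n (fun j => bcoef R M j * Sigma M u (anc z j)
          * (bcoef R M (j + 1) / bcoef R M (n + 1) - bcoef R M (j + 1) / bcoef R M n)).
rewrite /= in R1 R2.
have Hh : h (anc z n) = bcoef R M n * Sigma M u (anc z n) +
   \sum_(1 <= j < n) bcoef R M (j + 1) * bcoef R M j / bcoef R M (n + 1) * Sigma M u (anc z j).
  rewrite (C n Hn2) big_nat_recr //= addrC; congr (_ + _).
  by field; rewrite bnz.
split; first by rewrite R1.
rewrite /incr Hh R2 (C n.-1); last by lia.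
rewrite prednK // (_ : (n.-1 + 1 = n)%N); last by lia.
have E : \sum_(1 <= j < n) (bcoef R M j * Sigma M u (anc z j)
          * (bcoef R M (j + 1) / bcoef R M (n + 1) - bcoef R M (j + 1) / bcoef R M n)) =
   \sum_(1 <= j < n)
   (bcoef R M (j + 1) * bcoef R M j / bcoef R M (n + 1) * Sigma M u (anc z j)
    - bcoef R M (j + 1) * bcoef R M j / bcoef R M n * Sigma M u (anc z j)).
  by apply: eq_bigr => j _; ring.
rewrite E sumrB; ring.
Qed.
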